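(* Let $\mu,P$ be Borel probability measures on $\mathbb{R}^d$ absolutely continuous w.r.t. Lebesgue measure, and let $u\in\mathbb{R}^d$ with $\mathrm{TD}(u;\mu)>0$. Then for every $\varepsilon\in[0,\mathrm{TD}(u;\mu))$ there exists $R>0$ such that $$\{x\in\partial\varphi_{\mu\to\nu}(u):\ \varphi_{\mu\to\nu}\in\Gamma_\varepsilon(P)\}\subset R\,\mathbb{B}.$$
   Context: $\mathbb{B}=\{x:\|x\|\leq1\}$; $\mathrm{TD}(u;\mu)=\min_{v\in\mathcal{S}^{d-1}}\mu(\{z:\langle v,z-u\rangle\geq0\})$; $\partial\psi(u)=\{x:\psi(z)\geq\psi(u)+\langle x,z-u\rangle\ \forall z\}$. $\mathcal{Q}_\varepsilon(P)=\{P+\varepsilon(Q-P):Q\text{ a Borel probability measure}\}\cap\{\text{probability measures absolutely continuous w.r.t. Lebesgue}\}$, and $\Gamma_\varepsilon(P)$ is the set of lower semicontinuous convex functions $\varphi_{\mu\to\nu}$ whose gradient pushes $\mu$ forward to some $\nu\in\mathcal{Q}_\varepsilon(P)$. *)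

(* Defs.v *)
From HB Require Import structures.
From mathcomp Require Import all_boot all_order all_algebra.
From mathcomp Require Import all_classical all_reals all_analysis.
Import Order.TTheory GRing.Theory Num.Theory.
Import numFieldNormedType.Exports.

Set Implicit Arguments.
Unset Strict Implicit.
Unset Printing Implicit Defensive.

Local Open Scope classical_set_scope.
Local Open Scope ring_scope.

(* R^d = row vectors 'rV[R]_d with the Borel sigma-algebra (generated by the
   open sets of the product topology). *)
Notation Rd R d := (g_sigma_algebraType (@open 'rV[R]_d)).

Definition dotv (R : realType) (d : nat) (x y : 'rV[R]_d) : R :=
  \sum_(i < d) x ord0 i * y ord0 i.

Definition enorm (R : realType) (d : nat) (x : 'rV[R]_d) : R :=
  Num.sqrt (dotv x x).

Definition box (R : realType) (d : nat) (a b : 'rV[R]_d) : set 'rV[R]_d :=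
  [set x | forall i : 'I_d, a ord0 i <= x ord0 i <= b ord0 i].

Definition box_vol (R : realType) (d : nat) (a b : 'rV[R]_d) : R :=
  \prod_(i < d) (b ord0 i - a ord0 i).

Definition lebesgue_null (R : realType) (d : nat) (A : set 'rV[R]_d) : Prop :=
  forall e : R, 0 < e ->
    exists a b : nat -> 'rV[R]_d,
      (forall n (i : 'I_d), a n ord0 i <= b n ord0 i) /\
      A `<=` \bigcup_n box (a n) (b n) /\
      (forall N : nat, \sum_(n < N) box_vol (a n) (b n) <= e).

Definition abs_cont (R : realType) (d : nat) (mu : set (Rd R d) -> \bar R) : Prop :=
  forall A : set (Rd R d), measurable A -> lebesgue_null A -> mu A = 0%E.

(* Tukey depth TD(u; mu) = min_{v in S^{d-1}} mu {z | <v, z - u> >= 0}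
   (written as an infimum; it is attained). *)
Definition TD (R : realType) (d : nat) (mu : set (Rd R d) -> \bar R)
    (u : 'rV[R]_d) : \bar R :=
  ereal_inf [set mu [set z | 0 <= dotv v (z - u)] | v in [set v | enorm v = 1]].

Definition subdiff (R : realType) (d : nat) (psi : 'rV[R]_d -> \bar R)
    (u : 'rV[R]_d) : set 'rV[R]_d :=
  [set x | forall z, (psi u + (dotv x (z - u)%R)%:E <= psi z)%E].

Definition convex_ext (R : realType) (d : nat) (psi : 'rV[R]_d -> \bar R) : Prop :=
  (forall x : 'rV[R]_d, psi x != -oo%E) /\
  forall (x y : 'rV[R]_d) (t : R), 0 < t < 1 ->
    (psi (t *: x + (1 - t) *: y)%R <= t%:E * psi x + (1 - t)%:E * psi y)%E.

Definition lsc_ext (R : realType) (d : nat) (psi : 'rV[R]_d -> \bar R) : Prop :=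
  forall (x : 'rV[R]_d) (a : R), (a%:E < psi x)%E ->
    \forall y \near x, (a%:E < psi y)%E.

Definition has_gradient (R : realType) (d : nat) (psi : 'rV[R]_d -> \bar R)
    (x g : 'rV[R]_d) : Prop :=
  psi x \is a fin_num /\
  forall e : R, 0 < e -> exists del : R, 0 < del /\
    forall h : 'rV[R]_d, enorm h < del ->
      exists r : R, psi (x + h) = r%:E /\
        `| r - fine (psi x) - dotv g h | <= e * enorm h.

(* The gradient of psi pushes mu forward to nu: psi is differentiable
   mu-a.e., its gradient agrees mu-a.e. with a Borel map T, and T#mu = nu. *)
Definition grad_pushforward (R : realType) (d : nat)
    (mu nu : set (Rd R d) -> \bar R) (psi : 'rV[R]_d -> \bar R) : Prop :=
  exists T : Rd R d -> Rd R d,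
    measurable_fun [set: Rd R d] T /\
    (exists N : set (Rd R d), measurable N /\ mu N = 0%E /\
       forall x, ~ N x -> has_gradient psi x (T x)) /\
    (forall B : set (Rd R d), measurable B -> nu B = mu (T @^-1` B)).

Definition in_Qeps (R : realType) (d : nat) (eps : R)
    (P nu : set (Rd R d) -> \bar R) : Prop :=
  abs_cont nu /\
  exists Q : probability (Rd R d) R,
    forall A : set (Rd R d), measurable A ->
      nu A = (P A + eps%:E * (Q A - P A))%E.

Definition in_Gamma (R : realType) (d : nat) (eps : R)
    (mu P : set (Rd R d) -> \bar R) (psi : 'rV[R]_d -> \bar R) : Prop :=
  convex_ext psi /\ lsc_ext psi /\
  exists nu : probability (Rd R d) R,
    in_Qeps eps P nu /\ grad_pushforward mu nu psi.

(* Main.v *)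
Require Import Defs.
From HB Require Import structures.
From mathcomp Require Import all_boot all_order all_algebra.
From mathcomp Require Import all_classical all_reals all_analysis.
From mathcomp Require Import ring lra.
Import Order.TTheory GRing.Theory Num.Theory.
Import numFieldNormedType.Exports.
Local Open Scope classical_set_scope.
Local Open Scope ring_scope.
Set Implicit Arguments.
Unset Strict Implicit.
Unset Printing Implicit Defensive.
Section A.
Variables (R : realType) (d : nat).
Implicit Types x y z u g h : 'rV[R]_d.

Lemma dotvC x y : dotv x y = dotv y x.
Proof. by apply: eq_bigr => i _; rewrite mulrC. Qed.
Lemma dotvDr x y z : dotv x (y + z) = dotv x y + dotv x z.
Proof. by rewrite /dotv -big_split /=; apply: eq_bigr => i _; rewrite mxE mulrDr. Qed.
Lemma dotvNr x y : dotv x (- y) = - dotv x y.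
Proof. by rewrite /dotv -sumrN; apply: eq_bigr => i _; rewrite mxE mulrN. Qed.
Lemma dotvBr x y z : dotv x (y - z) = dotv x y - dotv x z.
Proof. by rewrite dotvDr dotvNr. Qed.
Lemma dotvZr x y (t : R) : dotv x (t *: y) = t * dotv x y.
Proof. by rewrite /dotv mulr_sumr; apply: eq_bigr => i _; rewrite mxE mulrCA. Qed.
Lemma dotvZl x y (t : R) : dotv (t *: x) y = t * dotv x y.
Proof. by rewrite dotvC dotvZr dotvC. Qed.
Lemma dotvBl x y z : dotv (x - y) z = dotv x z - dotv y z.
Proof. by rewrite dotvC dotvBr !(dotvC z). Qed.
Lemma dotv_ge0 x : 0 <= dotv x x.
Proof. by apply: sumr_ge0 => i _; rewrite -expr2 sqr_ge0. Qed.
Lemma enorm_ge0 x : 0 <= enorm x.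
Proof. exact: sqrtr_ge0. Qed.
Lemma enormZ x (t : R) : enorm (t *: x) = `|t| * enorm x.
Proof. by rewrite /enorm dotvZl dotvZr mulrA -expr2 sqrtrM ?sqr_ge0 // sqrtr_sqr. Qed.
Lemma dotv_self x : dotv x x = enorm x ^+ 2.
Proof. by rewrite /enorm sqr_sqrtr // dotv_ge0. Qed.

Lemma grad_mono (psi : 'rV[R]_d -> \bar R) u z x g :
  convex_ext psi -> subdiff psi u x -> has_gradient psi z g ->
  dotv x (z - u) <= dotv g (z - u).
Proof.
move=> [psiNoo conv] sub [fz grad].
case E0 : (psi z) fz => [r0| |] // _.
case Eu : (psi u) (psiNoo u) => [a| |] // _; last first.
  by have := sub z; rewrite Eu E0.
have ha : a + dotv x (z - u) <= r0.
  by have := sub z; rewrite Eu E0 -EFinD lee_fin.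
rewrite leNgt; apply/negP => HD.
set D := dotv x (z - u) - dotv g (z - u).
have D0 : 0 < D by rewrite subr_gt0.
set h := u - z.
have hn := enorm_ge0 h.
have e0 : 0 < D / (2 * (enorm h + 1)) by rewrite divr_gt0 // mulr_gt0 // ltr_wpDl.
have [del [del0 Hdel]] := grad _ e0.
set t := Num.min (2^-1) (del / (2 * (enorm h + 1))).
have t0 : 0 < t by rewrite lt_min invr_gt0 ltr0n /= divr_gt0 // mulr_gt0 // ltr_wpDl.
have t1 : t < 1 by rewrite gt_min; apply/orP; left; rewrite invf_lt1 // ltr1n.
have tdel : enorm (t *: h) < del.
  rewrite enormZ gtr0_norm //.
  have : t <= del / (2 * (enorm h + 1)) by rewrite ge_min lexx orbT.
  rewrite ler_pdivlMr ?mulr_gt0 ?ltr_wpDl // => H.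
  apply: lt_le_trans H; rewrite ltr_pM2l //; lra.
have [r [Er Hr]] := Hdel _ tdel.
have conv1 := conv u z t.
rewrite t0 t1 /= in conv1.
have conv2 := conv1 isT.
have Ez : t *: u + (1 - t) *: z = z + t *: h.
  by apply/rowP => i; rewrite !mxE; ring.
rewrite Ez Er Eu E0 -!EFinM -EFinD lee_fin in conv2.
move: conv2 => {conv1} conv1.
rewrite E0 /= dotvZr enormZ (gtr0_norm t0) in Hr.
have Hdh : dotv g h = - dotv g (z - u) by rewrite -dotvNr opprB.
have Hxh : dotv x h = - dotv x (z - u) by rewrite -dotvNr opprB.
have H1 : r0 + t * dotv g h - D / (2 * (enorm h + 1)) * (t * enorm h) <= r.
  have Hr' : `|r - r0 - t * dotv g h| <= D / (2 * (enorm h + 1)) * (t * enorm h) := Hr.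
  move: Hr'; rewrite ler_norml => /andP [Hr2 _]; lra.
have H2 : t * (dotv g h - dotv x h) <= D / (2 * (enorm h + 1)) * (t * enorm h).
  have : t * a <= t * r0 - t * dotv x (z - u).
    have : t * (a + dotv x (z - u)) <= t * r0 by rewrite ler_pM2l.
    lra.
  rewrite Hxh; lra.
have H3 : dotv g h - dotv x h = D by rewrite Hdh Hxh /D; lra.
rewrite H3 mulrCA ler_pM2l // in H2.
have : D / (2 * (enorm h + 1)) * enorm h < D.
  rewrite mulrAC ltr_pdivrMr ?mulr_gt0 ?ltr_wpDl // ltr_pM2l //; lra.
lra.
Qed.
End A.
Lemma trunc_clip (R : realType) (n : nat) (x : R) : 0 <= x -> x <= n.+1%:R ->
  (minn (Num.Def.truncn x) n)%:R <= x <= (minn (Num.Def.truncn x) n)%:R + 1.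
Proof.
move=> x0 xn; case: (leqP (Num.Def.truncn x) n) => H.
  have := truncn_itv x0; rewrite -natr1 => /andP [-> /ltW] //.
have : n.+1%:R <= x by rewrite -truncn_ge_nat.
move=> h; have -> : x = n.+1%:R by apply/eqP; rewrite eq_le xn h.
by rewrite -natr1 lerDl ler01 lexx.
Qed.
Section B.
Variables (R : realType) (d : nat) (u w : 'rV[R]_d) (K : R) (j : 'I_d) (n : nat).

Definition sB : R := 2 * K / n.+1%:R.
Definition Lw : R := (\sum_i `|w ord0 i|) / `|w ord0 j|.
Definition hh : R := Lw * sB.
Definition corner (k : {ffun 'I_d -> 'I_n.+1}) (i : 'I_d) : R :=
  u ord0 i - K + (k i)%:R * sB.
Definition cc k : R := u ord0 j -
  (w ord0 j)^-1 * \sum_(i | i != j) w ord0 i * (corner k i - u ord0 i).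
Definition hk (k : {ffun 'I_d -> 'I_n.+1}) : R := if k j == ord0 then hh else 0.
Definition Abox k : 'rV[R]_d := \row_i (if i == j then cc k - hk k else corner k i).
Definition Bbox k : 'rV[R]_d := \row_i (if i == j then cc k + hk k else corner k i + sB).
Definition Gv (i : 'I_d) (c : 'I_n.+1) : R :=
  if i == j then (if c == ord0 then 2 * hh else 0) else sB.

Lemma volAB k : box_vol (Abox k) (Bbox k) = \prod_i Gv i (k i).
Proof.
rewrite /box_vol; apply: eq_bigr => i _; rewrite !mxE /Gv.
case: eqP => [->|_]; last by rewrite addrC addKr.
by rewrite /hk; case: eqP => _; ring.
Qed.

Lemma sum_vol : \sum_k box_vol (Abox k) (Bbox k) =
  2 * hh * \prod_(i | i != j) (2 * K).
Proof.
rewrite (eq_bigr _ (fun k _ => volAB k)).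
rewrite -bigA_distr_bigA (bigD1 j) //=; congr (_ * _).
  rewrite (bigD1 ord0) //= big1 /Gv ?eqxx ?addr0 // => c /negPf -> /=.
  by case: (c == ord0).
apply: eq_bigr => i /negPf ij; rewrite /Gv ij sumr_const card_ord /sB.
by rewrite -[_ *+ _]mulr_natr mulfVK // pnatr_eq0.
Qed.

Lemma coverB (z : 'rV[R]_d) : 0 < K -> w ord0 j != 0 -> (forall i, `|z ord0 i - u ord0 i| <= K) ->
  dotv w (z - u) = 0 -> exists k, box (Abox k) (Bbox k) z.
Proof.
move=> K0 wj0 zK hz.
have sB0 : 0 < sB by rewrite /sB divr_gt0 // mulr_gt0.
pose k := [ffun i => if i == j then ord0 else
   inord (minn (Num.Def.truncn ((z ord0 i - u ord0 i + K) / sB)) n) : 'I_n.+1].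
have Hc : forall i, i != j -> corner k i <= z ord0 i <= corner k i + sB.
  move=> i ij.
  rewrite /corner ffunE (negPf ij) inordK; last by rewrite ltnS geq_minr.
  set x := (z ord0 i - u ord0 i + K) / sB.
  have zx : z ord0 i = u ord0 i - K + x * sB by rewrite /x mulfVK ?gt_eqF //; ring.
  have := zK i; rewrite ler_norml => /andP [h1 h2].
  have x0 : 0 <= x by rewrite /x divr_ge0 ?(ltW sB0) //; lra.
  have xn : x <= n.+1%:R.
    rewrite /x ler_pdivrMr // /sB mulrCA mulfV ?mulr1 ?pnatr_eq0 //; lra.
  have /andP [c1 c2] := @trunc_clip R n x x0 xn.
  rewrite zx; apply/andP; split.
    by rewrite lerD2l ler_pM2r.
  have : x * sB <= ((minn (Num.Def.truncn x) n)%:R + 1) * sB by rewrite ler_pM2r.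
  lra.
exists k => i; rewrite !mxE.
case: (eqVneq i j) => [->|ij]; last by apply: Hc.
rewrite /hk ffunE eqxx -ler_distl.
have wj : w ord0 j * (z ord0 j - u ord0 j) =
    - \sum_(i | i != j) w ord0 i * (z ord0 i - u ord0 i).
  move: hz; rewrite /dotv (bigD1 j) //= !mxE => /eqP; rewrite addr_eq0 => /eqP ->.
  by congr (- _); apply: eq_bigr => i0 _; rewrite !mxE.
have E : z ord0 j - cc k =
    - (w ord0 j)^-1 * \sum_(i | i != j) w ord0 i * (z ord0 i - corner k i).
  have -> : \sum_(i | i != j) w ord0 i * (z ord0 i - corner k i) =
      \sum_(i | i != j) w ord0 i * (z ord0 i - u ord0 i) -
      \sum_(i | i != j) w ord0 i * (corner k i - u ord0 i).
    by rewrite -sumrB; apply: eq_bigr => i0 _; ring.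
  have wj2 : \sum_(i | i != j) w ord0 i * (z ord0 i - u ord0 i) = - (w ord0 j * (z ord0 j - u ord0 j)) by rewrite wj opprK.
  rewrite wj2 /cc; field; exact: wj0.
rewrite E normrM normrN normfV /hh /Lw.
rewrite mulrC mulrAC ler_pM2r ?invr_gt0 ?normr_gt0 //.
apply: le_trans (ler_norm_sum _ _ _) _.
apply: le_trans (_ : \sum_(i | i != j) `|w ord0 i| * sB <= _).
  apply: ler_sum => i0 ij; rewrite normrM ler_wpM2l //.
  have /andP [c1 c2] := Hc i0 ij; rewrite ler_norml; apply/andP; split; lra.
rewrite -mulr_suml ler_wpM2r ?(ltW sB0) //.
rewrite [X in _ <= X](bigD1 j) //= lerDr //.
Qed.
End B.
Lemma sum_prefix (R : realType) (g : nat -> R) M : (forall N, 0 <= g N) ->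
  (forall N, (M <= N)%N -> g N = 0) -> forall N, \sum_(i < N) g i <= \sum_(i < M) g i.
Proof.
move=> g0 gM N; rewrite -!(big_mkord xpredT).
case: (leqP N M) => NM.
  by rewrite (big_cat_nat (leq0n N) NM) /= lerDl sumr_ge0.
rewrite (big_cat_nat (leq0n M) (ltnW NM)) /= gerDl big_nat_cond big1 //.
by move=> i /andP [/andP [Mi _] _]; apply: gM.
Qed.

Lemma boxvol00 (R : realType) d (j : 'I_d) : box_vol (0 : 'rV[R]_d) 0 = 0.
Proof. by rewrite /box_vol (bigD1 j) //= !mxE subrr mul0r. Qed.


Lemma hyper_null (R : realType) d (u w : 'rV[R]_d) (K : R) (j : 'I_d) :
  0 < K -> w ord0 j != 0 ->
  lebesgue_null [set z : 'rV[R]_d | (forall i, `|z ord0 i - u ord0 i| <= K) /\ dotv w (z - u) = 0].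
Proof.
move=> K0 wj0 e e0.
set C := \prod_(i | i != j) (2 * K).
have C0 : 0 <= C by apply: prodr_ge0 => i _; rewrite mulr_ge0 // ltW.
have Lw0 : 0 <= Lw w j by rewrite /Lw divr_ge0 // sumr_ge0.
set n := Num.Def.truncn (4 * Lw w j * K * C / e).
have nbig : 4 * Lw w j * K * C / e < n.+1%:R by apply: truncnS_gt.
pose F := {ffun 'I_d -> 'I_n.+1}.
pose k0 : F := [ffun => ord0].
pose a N := if (N < #|F|)%N then Abox u w K j (nth k0 (enum F) N) else 0.
pose b N := if (N < #|F|)%N then Bbox u w K j (nth k0 (enum F) N) else 0.
have sB0 : 0 < sB K n by rewrite /sB divr_gt0 // mulr_gt0.
have hh0 : 0 <= hh w K j n by rewrite /hh mulr_ge0 // ltW.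
exists a, b; split; [|split].
- move=> N i; rewrite /a /b; case: ifP => _; last by rewrite !mxE.
  rewrite !mxE; case: eqP => _; last by rewrite lerDl ltW.
  rewrite /hk; case: eqP => _; lra.
- move=> z [zK hz].
  have [k hk] := coverB n K0 wj0 zK hz.
  exists (index k (enum F)) => //.
  have Hi : (index k (enum F) < #|F|)%N by rewrite cardE index_mem mem_enum.
  by rewrite /a /b Hi nth_index ?mem_enum.
- move=> N.
  have g0 : forall N0, 0 <= box_vol (a N0) (b N0).
    move=> N0; rewrite /a /b; case: ifP => _; last by rewrite boxvol00.
    rewrite volAB; apply: prodr_ge0 => i _; rewrite /Gv.
    case: eqP => _; last exact: ltW.
    by case: ifP => _ //; apply: mulr_ge0.
  apply: le_trans (@sum_prefix R (fun N0 => box_vol (a N0) (b N0)) #|F| g0 _ N) _.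
    by move=> N0 HN; rewrite /a /b ltnNge HN /= (boxvol00 R j).
  have -> : \sum_(i < #|F|) box_vol (a i) (b i) =
      \sum_(i < #|F|) box_vol (Abox u w K j (nth k0 (enum F) i))
                              (Bbox u w K j (nth k0 (enum F) i)).
    by apply: eq_bigr => i _; rewrite /a /b ltn_ord.
  rewrite -(big_mkord xpredT (fun i => box_vol (Abox u w K j (nth k0 (enum F) i))
                              (Bbox u w K j (nth k0 (enum F) i)))).
  rewrite cardE.
  have En : \sum_(k <- enum F) box_vol (Abox u w K j k) (Bbox u w K j k) =
    \sum_(0 <= i < size (enum F)) box_vol (Abox u w K j (nth k0 (enum F) i))
         (Bbox u w K j (nth k0 (enum F) i)) by rewrite (big_nth k0).
  rewrite -En big_enum /= sum_vol /hh /sB.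
  have -> : 2 * (Lw w j * (2 * K / n.+1%:R)) * \prod_(i | i != j) (2 * K) =
      (4 * Lw w j * K * C) / n.+1%:R by rewrite /C; ring.
  rewrite ler_pdivrMr ?ltr0n //.
  move: nbig; rewrite ltr_pdivrMr //; nra.
Qed.
Section C.
Variables (R : realType) (d : nat).
Implicit Types (u w z : 'rV[R]_d).

Lemma open_meas (A : set 'rV[R]_d) : open A -> measurable (A : set (Rd R d)).
Proof. move=> oA. exact: sub_sigma_algebra. Qed.
Lemma closed_meas (A : set 'rV[R]_d) : closed A -> measurable (A : set (Rd R d)).
Proof. move=> cA. rewrite -[A]setCK. apply: measurableC. apply: open_meas. exact: closed_openC. Qed.

Lemma cont_coordB (u : 'rV[R]_d) i : continuous (fun z : 'rV[R]_d => z ord0 i - u ord0 i).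
Proof.
move=> z; apply: continuousB; last exact: cst_continuous.
exact: coord_continuous.
Qed.

Lemma cont_term w u i : continuous (fun z : 'rV[R]_d => w ord0 i * (z ord0 i - u ord0 i)).
Proof. move=> z; have := (@cvgMl_tmp R _ _ _ (fun z : 'rV[R]_d => z ord0 i - u ord0 i) (w ord0 i) _ (@cont_coordB u i z)). move=> H; exact: H. Qed.

Lemma cont_dot w u : continuous (fun z : 'rV[R]_d => dotv w (z - u)).
Proof.
have -> : (fun z : 'rV[R]_d => dotv w (z - u)) =
    (fun z => \sum_(i <- index_enum 'I_d) (fun i z => w ord0 i * (z ord0 i - u ord0 i)) i z).
  by apply: funext => z; rewrite /dotv; apply: eq_bigr => i _; rewrite !mxE.
apply: continuous_big; first exact: add_continuous.
by move=> i _; exact: cont_term.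
Qed.

Lemma closed_cube u (K : R) : closed [set z : 'rV[R]_d | forall i, `|z ord0 i - u ord0 i| <= K].
Proof.
have -> : [set z : 'rV[R]_d | forall i, `|z ord0 i - u ord0 i| <= K] =
   \bigcap_i ((fun z : 'rV[R]_d => `|z ord0 i - u ord0 i|) @^-1` [set r | r <= K]).
  apply/seteqP; split=> z /=; [move=> H i _; exact: H | move=> H i; exact: H].
apply: closed_bigI => i _.
apply: closed_comp; last exact: closed_le.
move=> z _; exact: (cvg_norm (@cont_coordB u i z)).

Qed.

Lemma closed_half w u (c : R) : closed [set z : 'rV[R]_d | c <= dotv w (z - u)].
Proof.
rewrite (_ : [set z : 'rV[R]_d | c <= dotv w (z - u)] =
  (fun z => dotv w (z - u)) @^-1` [set r | c <= r]) //.
apply: closed_comp; last exact: closed_ge.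
by move=> z _; apply: cont_dot.
Qed.

Lemma closed_hyp w u : closed [set z : 'rV[R]_d | dotv w (z - u) = 0].
Proof.
rewrite (_ : [set z : 'rV[R]_d | dotv w (z - u) = 0] =
  (fun z => dotv w (z - u)) @^-1` [set r | r = 0]) //.
apply: closed_comp; last exact: closed_eq.
by move=> z _; apply: cont_dot.
Qed.

Lemma closed_sph : closed [set v : 'rV[R]_d | dotv v v = 1].
Proof.
rewrite (_ : [set v : 'rV[R]_d | dotv v v = 1] =
  (fun z => \sum_(i <- index_enum 'I_d)
     (fun i (z : 'rV[R]_d) => (z ord0 i - (0 : 'rV[R]_d) ord0 i) * (z ord0 i - (0 : 'rV[R]_d) ord0 i)) i z)
   @^-1` [set r | r = 1]); last first.
  apply/seteqP; split => v /=; rewrite /dotv;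
  by under eq_bigr do rewrite mxE subr0.
apply: closed_comp; last exact: closed_eq.
move=> z _; apply: continuous_big; first exact: add_continuous.
move=> i _ y; exact: (cvgM (@cont_coordB 0 i y) (@cont_coordB 0 i y)).
Qed.
End C.

Lemma coord_le1 (R : realType) d (v : 'rV[R]_d) i : dotv v v = 1 -> `|v ord0 i| <= 1.
Proof.
move=> hv.
have : v ord0 i * v ord0 i <= 1.
  rewrite -hv /dotv (bigD1 i) //= lerDl sumr_ge0 // => k _.
  by rewrite -expr2 sqr_ge0.
move=> h.
have n0 := normr_ge0 (v ord0 i).
have e : `|v ord0 i| * `|v ord0 i| = v ord0 i * v ord0 i by rewrite -normrM ger0_norm // -expr2 sqr_ge0.
nra.
Qed.

Lemma compact_sph (R : realType) d : compact [set v : 'rV[R]_d | dotv v v = 1].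
Proof.
apply: bounded_closed_compact; last exact: closed_sph.
exists 1; split => // M M1 v /= hv.
rewrite [`|v|]/Num.norm /= mx_normrE; apply: bigmax_le => [|[a b] _]; first by lra.
rewrite (ord1 a) /=; have := coord_le1 b hv; lra.
Qed.
Section D.
Context (dd : measure_display) (T : measurableType dd) (R : realType).
Variable (mu : probability T R).
Local Notation m A := (fine (mu A)).

Lemma mE A : measurable A -> mu A = (m A)%:E.
Proof. by move=> mA; rewrite fineK // fin_num_measure. Qed.
Lemma m_ge0 A : measurable A -> 0 <= m A.
Proof. by move=> mA; rewrite -lee_fin -mE. Qed.
Lemma m_le1 A : measurable A -> m A <= 1.
Proof. by move=> mA; rewrite -lee_fin -mE // probability_le1. Qed.
Lemma m_setT : m setT = 1.
Proof. by rewrite probability_setT. Qed.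
Lemma m_mono A B : measurable A -> measurable B -> A `<=` B -> m A <= m B.
Proof. by move=> mA mB AB; rewrite -lee_fin -!mE // le_measure // inE. Qed.
Lemma m_U2 A B : measurable A -> measurable B -> m (A `|` B) <= m A + m B.
Proof.
move=> mA mB; rewrite -lee_fin EFinD -!mE //; last exact: measurableU.
exact: measureU2.
Qed.
Lemma m_disj A B : measurable A -> measurable B -> A `&` B = set0 -> m (A `|` B) = m A + m B.
Proof.
move=> mA mB AB; apply/eqP; rewrite -eqe EFinD -!mE //; last exact: measurableU.
by rewrite measureU.
Qed.
Lemma m_compl A : measurable A -> m (~` A) = 1 - m A.
Proof.
move=> mA; rewrite -m_setT -(setUv A) m_disj //; first ring.
  exact: measurableC.
by rewrite setICr.
Qed.

Lemma m_exists_gt (F : nat -> set T) (b : R) : (forall n, measurable (F n)) ->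
  nondecreasing_seq F -> b < m (\bigcup_n F n) -> exists n, b < m (F n).
Proof.
move=> mF ndF hb; apply/not_existsP => H.
have mU : measurable (\bigcup_n F n) by exact: bigcupT_measurable.
have Hc := @nondecreasing_cvg_mu _ _ _ mu F mF mU ndF.
suff : (mu (\bigcup_n F n) <= b%:E)%E by rewrite mE // lee_fin leNgt hb.
apply: (cvge_to_le Hc); apply: nearW => n /=.
by rewrite mE // lee_fin leNgt; apply/negP => h; apply: (H n).
Qed.
End D.
Definition cube (R : realType) d (c : 'rV[R]_d) (K : R) : set 'rV[R]_d :=
  [set z | forall i, `|z ord0 i - c ord0 i| <= K].
Definition halfs (R : realType) d (w u : 'rV[R]_d) (c : R) : set 'rV[R]_d :=
  [set z | c <= dotv w (z - u)].

Lemma bound_dot (R : realType) d (a b : 'rV[R]_d) (A B : R) :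
  (forall i, `|a ord0 i| <= A) -> (forall i, `|b ord0 i| <= B) ->
  `|dotv a b| <= d%:R * (A * B).
Proof.
move=> ha hb; apply: le_trans (ler_norm_sum _ _ _) _.
apply: le_trans (_ : \sum_(i < d) A * B <= _).
  by apply: ler_sum => i _; rewrite normrM ler_pM.
by rewrite sumr_const card_ord mulr_natl.
Qed.

Section E.
Variables (R : realType) (d : nat).
Local Notation m mu A := (fine (mu A)).

Lemma meas_cube (c : 'rV[R]_d) K : measurable (cube c K : set (Rd R d)).
Proof. by apply: closed_meas; apply: closed_cube. Qed.
Lemma meas_halfs (w u : 'rV[R]_d) c : measurable (halfs w u c : set (Rd R d)).
Proof. by apply: closed_meas; apply: closed_half. Qed.

Lemma cube_exhaust (mu : probability (Rd R d) R) (c : 'rV[R]_d) (eta : R) :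
  0 < eta -> exists K, 0 < K /\ 1 - eta < m mu (cube c K).
Proof.
move=> eta0.
pose F n : set (Rd R d) := cube c n.+1%:R.
have mF n : measurable (F n) by exact: meas_cube.
have ndF : nondecreasing_seq F.
  move=> a b ab; apply/subsetPset => z /= hz i; apply: le_trans (hz i) _; by rewrite ler_nat.
have U : \bigcup_n F n = setT.
  apply/seteqP; split => // z _.
  pose S := \sum_i `|z ord0 i - c ord0 i|.
  exists (Num.Def.truncn S) => // i.
  apply: le_trans (ltW (truncnS_gt S)).
  by rewrite /S (bigD1 i) //= lerDl sumr_ge0.
have [n hn] : exists n, 1 - eta < m mu (F n).
  by apply: m_exists_gt => //; rewrite U m_setT; lra.
by exists n.+1%:R; split.
Qed.
End E.
Section F.
Variables (R : realType) (d : nat).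
Local Notation m mu A := (fine (mu A)).

Lemma dir_step (mu : probability (Rd R d) R) (u w : 'rV[R]_d) K b :
  abs_cont mu -> 0 < K -> dotv w w = 1 ->
  b < m mu (cube u K `&` halfs w u 0) ->
  exists n, b < m mu (cube u K `&` halfs w u n.+1%:R^-1).
Proof.
move=> ac K0 hw hb.
have [j wj] : exists j, w ord0 j != 0.
  apply/not_existsP => H; move: hw; rewrite /dotv big1 => [/eqP|i _].
    by rewrite eq_sym oner_eq0.
  by have /negP/negPn/eqP -> := H i; rewrite mul0r.
pose L : set (Rd R d) := cube u K `&` [set z | dotv w (z - u) = 0].
have mL : measurable L.
  by apply: closed_meas; apply: closedI; [exact: closed_cube | exact: closed_hyp].
have L0 : mu L = 0%E by apply: ac => //; exact: (hyper_null u K0 wj).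
pose F n : set (Rd R d) := cube u K `&` halfs w u n.+1%:R^-1.
have mF n : measurable (F n) by apply: measurableI; [exact: meas_cube | exact: meas_halfs].
have ndF : nondecreasing_seq F.
  move=> a c ac'; apply/subsetPset => z /= [hz1 hz2]; split => //.
  apply: le_trans hz2; rewrite lef_pV2 ?posrE ?ltr0n // ler_nat; exact: ac'.
apply: m_exists_gt => //.
apply: (lt_le_trans hb).
have mU : measurable (\bigcup_n F n) by exact: bigcupT_measurable.
apply: le_trans (_ : m mu ((\bigcup_n F n) `|` L) <= _).
  apply: m_mono => //.
  - by apply: measurableI; [exact: meas_cube | exact: meas_halfs].
  - exact: measurableU.
  move=> z [hz1 hz2]; rewrite /halfs /= in hz2.
  case: (ltrgt0P (dotv w (z - u))) hz2 => [hp|hn|h0] hz2.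
  - left; exists (Num.Def.truncn (dotv w (z - u))^-1) => //; split => //.
    rewrite /halfs /= -[leRHS]invrK lef_pV2 ?posrE ?invr_gt0 ?ltr0n //.
    exact/ltW/truncnS_gt.
  - by move: hz2 hn; rewrite /= ?leNgt; lra.
  - by right; split.
apply: le_trans (m_U2 _ _ _) _ => //.
by rewrite L0 /= addr0.
Qed.
End F.
Lemma ball_coord (R : realType) d (w v : 'rV[R]_d) (r : R) : ball w r v -> forall i, `|w ord0 i - v ord0 i| < r.
Proof. by move=> [_ H] i; have := H ord0 i. Qed.

Section G.
Variables (R : realType) (d : nat).
Local Notation m mu A := (fine (mu A)).

Lemma unif_step (mu : probability (Rd R d) R) (u : 'rV[R]_d) K b :
  abs_cont mu -> 0 < K ->
  (forall w, dotv w w = 1 -> b < m mu (cube u K `&` halfs w u 0)) ->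
  exists del, 0 < del /\ forall v, dotv v v = 1 -> b < m mu (cube u K `&` halfs v u del).
Proof.
move=> ac K0 hyp.
have cpt := @compact_sph R d.
move/compact_near_coveringP : cpt => cpt.
pose P n v := b < m mu (cube u K `&` halfs v u n.+1%:R^-1).
suff Hcov : forall w, dotv w w = 1 -> \forall v \near w & n \near \oo, P n v.
  have := cpt nat \oo P _ Hcov.
  move=> [N _ HN]; exists N.+1%:R^-1; split; first by rewrite invr_gt0 ltr0n.
  by move=> v hv; apply: (HN N) => //=.
move=> w hw.
have [n0 hn0] := dir_step ac K0 hw (hyp w hw).
set g := n0.+1%:R^-1 : R.
have g0 : 0 < g by rewrite invr_gt0 ltr0n.
set r := g / (2 * (d%:R * K + 1)).
have dK0 : 0 <= d%:R * K by rewrite mulr_ge0 // ltW.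
have r0 : 0 < r by rewrite divr_gt0 // mulr_gt0 // ltr_wpDl.
exists (ball w r, [set n | (2 * n0.+1 <= n)%N]) => /=.
  split; first exact: nbhsx_ballx.
  by exists (2 * n0.+1)%N.
move=> [v n] /= [bv nn].
apply: (lt_le_trans hn0); apply: m_mono.
- by apply: measurableI; [exact: meas_cube | exact: meas_halfs].
- by apply: measurableI; [exact: meas_cube | exact: meas_halfs].
move=> z [hz1 hz2]; split => //; rewrite /halfs /= in hz2 *.
have hvw : `|dotv (v - w) (z - u)| <= d%:R * (r * K).
  apply: bound_dot => i; last by rewrite !mxE; exact: (hz1 i).
  rewrite !mxE; have := ball_coord bv i; rewrite distrC => /ltW; exact.
have E : dotv v (z - u) = dotv w (z - u) + dotv (v - w) (z - u).
  by rewrite dotvBl; ring.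
have rK : d%:R * (r * K) <= g / 2.
  have dK1 : d%:R * K + 1 != 0 by rewrite gt_eqF // ltr_wpDl.
  rewrite (_ : d%:R * (r * K) = g / 2 * (d%:R * K / (d%:R * K + 1))); last first.
    by rewrite /r; field; rewrite dK1.
  rewrite ger_pMr ?divr_gt0 // ler_pdivrMr ?ltr_wpDl //; lra.
have ng : n.+1%:R^-1 <= g / 2.
  have -> : g / 2 = (2 * n0.+1)%:R^-1 by rewrite /g natrM invfM mulrC.
  rewrite lef_pV2 ?posrE ?ltr0n // ler_nat; exact: leq_trans nn _.
move: hvw; rewrite ler_norml => /andP [h1 _].
have s1 : g <= dotv w (z - u) by [].
have s2 : dotv v (z - u) = dotv w (z - u) + dotv (v - w) (z - u) := E.
have s3 : - (d%:R * (r * K)) <= dotv (v - w) (z - u) := h1.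

have s4 : g / 2 <= dotv v (z - u) by rewrite s2; lra.

exact: le_trans ng s4.
Qed.
End G.
Unset Implicit Arguments.

Theorem mainTheorem8 (R : realType) (d : nat)
    (mu P : probability (Rd R d) R) (u : 'rV[R]_d) :
  abs_cont mu -> abs_cont P ->
  (0 < TD mu u)%E ->
  forall eps : R, 0 <= eps -> (eps%:E < TD mu u)%E ->
  exists Rad : R, 0 < Rad /\
    forall psi : 'rV[R]_d -> \bar R, in_Gamma eps mu P psi ->
      forall x : 'rV[R]_d, subdiff psi u x -> enorm x <= Rad.
Proof.
move=> acmu acP TD0 eps eps0 epsTD.
have unitE : forall v : 'rV[R]_d, enorm v = 1 -> dotv v v = 1.
  by move=> v hv; rewrite dotv_self hv expr1n.
have unitE' : forall v : 'rV[R]_d, dotv v v = 1 -> enorm v = 1.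
  by move=> v hv; rewrite /enorm hv sqrtr1.
have [tau [epst htau]] : exists tau, eps < tau /\
    forall v, dotv v v = 1 -> (tau%:E <= mu (halfs v u 0))%E.
  have lb : forall v, dotv v v = 1 -> (TD mu u <= mu (halfs v u 0))%E.
    move=> v hv; apply: ereal_inf_lbound; exists v => //; exact: unitE'.
  move: epsTD lb; case: (TD mu u) => [t| |] //.
  - by rewrite lte_fin => h lb; exists t; split.
  - move=> _ lb; exists (eps + 1); split; first lra.
    by move=> v hv; have := lb v hv; rewrite leye_eq => /eqP ->; rewrite leey.
set eta := (tau - eps) / 4.
have eta0 : 0 < eta by rewrite /eta divr_gt0 // subr_gt0.
have [K [K0 hK]] := cube_exhaust mu u eta0.
have hyp : forall w, dotv w w = 1 ->
    tau - 2 * eta < fine (mu (cube u K `&` halfs w u 0)).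
  move=> w hw.
  have h1 := htau w hw; rewrite (mE mu (meas_halfs w u 0)) lee_fin in h1.
  have h2 : fine (mu (halfs w u 0)) <=
      fine (mu (cube u K `&` halfs w u 0)) + fine (mu (~` cube u K)).
    apply: le_trans (m_U2 _ _ _) => //.
    - apply: m_mono => //.
      + exact: meas_halfs.
      + by apply: measurableU; [apply: measurableI; [exact: meas_cube|exact: meas_halfs]|
                                 apply: measurableC; exact: meas_cube].
      move=> z hz; case: (pselect (cube u K z)) => hc; [left; split | right] => //.
    - by apply: measurableI; [exact: meas_cube|exact: meas_halfs].
    - by apply: measurableC; exact: meas_cube.
  rewrite m_compl in h2; last exact: meas_cube.
  lra.
have [del [del0 hdel]] := unif_step acmu K0 hyp.
have [R' [R'0 hR']] := cube_exhaust P 0 eta0.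
exists (d%:R * (K * R') / del + 1); split.
  by rewrite ltr_wpDl // divr_ge0 ?(ltW del0) // mulr_ge0 // mulr_ge0 ?ltW.
move=> psi [conv [lsc [nu [[acnu [Q hQ]] [T [mT [[N [mN [muN hN]]] push]]]]]]] x hx.
rewrite leNgt; apply/negP => hRx.
set Rad := d%:R * (K * R') / del + 1 in hRx.
have Rad0 : 0 < Rad by rewrite ltr_wpDl // divr_ge0 ?(ltW del0) // mulr_ge0 // mulr_ge0 ?ltW.
have xn0 : 0 < enorm x by apply: lt_trans hRx.
set v := (enorm x)^-1 *: x.
have hv : dotv v v = 1.
  apply: unitE; rewrite /v enormZ ger0_norm ?invr_ge0 ?(ltW xn0) // mulVf // gt_eqF //.
have xv : x = enorm x *: v by rewrite /v scalerA divff ?scale1r // gt_eqF.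
pose G : set (Rd R d) := cube u K `&` halfs v u del.
have mG : measurable G by apply: measurableI; [exact: meas_cube|exact: meas_halfs].
pose B : set (Rd R d) := ~` cube 0 R'.
have mB : measurable B by apply: measurableC; exact: meas_cube.
have mTB : measurable (T @^-1` B : set (Rd R d)).
  by rewrite -[X in measurable X]setTI; apply: mT.
have sub : G `<=` (T @^-1` B) `|` N.
  move=> z [hz1 hz2]; case: (pselect (N z)) => [Nz|nNz]; [by right|left].
  have gm := grad_mono conv hx (hN z nNz).
  rewrite /B /= => hc.
  have hb : `|dotv (T z) (z - u)| <= d%:R * (R' * K).
    apply: bound_dot => i; rewrite ?mxE.
      by have := hc i; rewrite mxE subr0.
    exact: (hz1 i).
  move: gm; rewrite {1}xv dotvZl => gm.
  have : enorm x * del <= enorm x * dotv v (z - u) by rewrite ler_pM2l.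
  have : enorm x * del > (d%:R * (K * R') / del + 1) * del by rewrite ltr_pM2r.
  rewrite mulrDl mulfVK ?gt_eqF // mul1r.
  move: hb; rewrite ler_norml => /andP [_ hb].
  have e : d%:R * (R' * K) = d%:R * (K * R') by rewrite (mulrC R').
  lra.
have h1 := hdel v hv.
have h2 : fine (mu G) <= fine (mu (T @^-1` B)) + fine (mu N).
  apply: le_trans (m_U2 _ _ _) => //.
  by apply: m_mono => //; exact: measurableU.
rewrite muN /= addr0 -push // in h2.
have h3 : fine (nu B) = fine (P B) + eps * (fine (Q B) - fine (P B)).
  by rewrite hQ // (mE P mB) (mE Q mB).
have h4 : fine (P B) < eta by rewrite /B m_compl //; [lra | exact: meas_cube].
have h5 : eps * (fine (Q B) - fine (P B)) <= eps.
  rewrite -[leRHS]mulr1; apply: ler_wpM2l => //.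
  have := m_le1 Q mB; have := m_ge0 P mB; lra.
have e2 : tau - 2 * eta = eps + 2 * eta by rewrite /eta; field.
have H1 : tau - 2 * eta < fine (nu B) := lt_le_trans h1 h2.
rewrite h3 in H1.
clear -H1 h4 h5 e2 eta0.
lra.
Qed.
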